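(* Consider the infinite-width limit ($N\to\infty$) of a two-layer linear network in the $\mu$P/mean-field parameterization with feature-learning strength $\gamma_0$ (as described in the context), trained by gradient flow on the MSE loss, with one data point per task: task $\mathcal{T}_1$ has input $\mathbf{x}_1$, task $\mathcal{T}_2$ has input $\mathbf{x}_2$, with $K^x_{11}=K^x_{22}=1$, $K^x_{12}=\rho\in[0,1]$, and both tasks have the same target $y$, and the initial residuals are $\Delta_1(0)=\Delta_2(0)=y$. Train on $\mathcal{T}_1$ only, for time $t$. Writing $\Delta_2(t)=\Delta_2^{(0)}(t)+\gamma_0\Delta_2^{(1)}(t)+\gamma_0^2\Delta_2^{(2)}(t)+O(\gamma_0^3)$, one has $\Delta_2^{(1)}\equiv 0$, $\lim_{t\to\infty}\Delta_2^{(0)}(t)=y(1-\rho)$ and $\lim_{t\to\infty}\Delta_2^{(2)}(t)=0$. Consequently the loss on task $\mathcal{T}_2$ after infinitely long training on $\mathcal{T}_1$ is $\frac{y^2}{2}(1-\rho)^2+O(\gamma_0^3)$, independent of $\gamma_0$ up to second order.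
   Context: Network: $f(\mathbf{x})=\frac{1}{\gamma_0N}\mathbf{w}\cdot\mathbf{h}(\mathbf{x})$, $\mathbf{h}(\mathbf{x})=D^{-1/2}\mathbf{W}^0\mathbf{x}$, weights initialized i.i.d. $\mathcal{N}(0,1)$, learning rate $\gamma_0^2N$. $K^x_{ij}=\frac1D\mathbf{x}_i\cdot\mathbf{x}_j$. Residual $\Delta_i=y-f(\mathbf{x}_i)$; in the infinite-width limit, during training on task $\mathcal{T}_1$, $\frac{d}{dt}\Delta_i=-K_{i1}(t)\Delta_1$ where $K_{ij}=\Phi_{ij}+G\,K^x_{ij}$ with limiting kernels $\Phi_{ij}=\mathbb{E}[h_ih_j]$, $G=\mathbb{E}[z^2]$ computed from the single-site process $h_i(t)=\chi_i+\gamma_0\int_0^t\Delta_1(s)z(s)K^x_{i1}ds$, $z(t)=\xi+\gamma_0\int_0^t\Delta_1(s)h_1(s)ds$, where $(\chi_1,\chi_2)$ is centered Gaussian with covariance $K^x$ and $\xi\sim\mathcal{N}(0,1)$ independent. The expansion is in powers of $\gamma_0$ with $\gamma_0$-independent coefficients. The loss on task $\mathcal{T}_2$ is $\frac12\Delta_2^2$. *)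

(* Defs.v *)
From HB Require Import structures.
From mathcomp Require Import all_boot all_order all_algebra.
From mathcomp Require Import all_classical all_reals all_analysis.
From mathcomp Require Import normal_distribution.
Set Implicit Arguments. Unset Strict Implicit. Unset Printing Implicit Defensive.
Import Order.TTheory GRing.Theory Num.Theory.
Import numFieldNormedType.Exports.
Local Open Scope classical_set_scope.
Local Open Scope ring_scope.

Definition centered_normal_law {R : realType} {d} {T : measurableType d}
  (P : probability T R) (Y : T -> R) (v : R) : Prop :=
  if 0 < v then
    forall A : set R, measurable A ->
      P (Y @^-1` A) = normal_prob 0 (Num.sqrt v) A
  else P [set w | Y w = 0] = 1%E.

(* (chi1, chi2, xi) is a centered Gaussian vector with covariance matrix
     [[1, rho, 0], [rho, 1, 0], [0, 0, 1]],
   i.e. (chi1, chi2) ~ N(0, K^x) with K^x_11 = K^x_22 = 1, K^x_12 = rho,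
   and xi ~ N(0,1) independent of (chi1, chi2).  Definition of a Gaussian
   vector: every linear combination is (possibly degenerate) centered normal
   with the variance prescribed by the covariance matrix. *)
Definition init_gaussian {R : realType} {d} {T : measurableType d}
  (P : probability T R) (rho : R) (chi1 chi2 xi : T -> R) : Prop :=
  [/\ measurable_fun setT chi1, measurable_fun setT chi2,
      measurable_fun setT xi &
      forall a b c : R,
        centered_normal_law P (fun w => a * chi1 w + b * chi2 w + c * xi w)
          (a ^+ 2 + b ^+ 2 + c ^+ 2 + 2 * a * b * rho)].

(* Real-valued expectation (used only together with integrability). *)
Definition Exp {R : realType} {d} {T : measurableType d}
  (P : probability T R) (X : T -> R) : R := fine ('E_P[X])%E.

Definition tint {R : realType} (f : R -> R) (t : R) : R :=
  \int[lebesgue_measure]_(s in `[0, t]) f s.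

Definition tintegrable {R : realType} (f : R -> R) (t : R) : Prop :=
  lebesgue_measure.-integrable `[0, t] (EFin \o f).

(* The infinite-width (single-site / DMFT) dynamics during training on T1,
   for a fixed feature-learning strength g0 (= gamma_0), with
   K^x_11 = K^x_22 = 1, K^x_21 = K^x_12 = rho, initial residuals y.
     h_i(t) = chi_i + g0 \int_0^t D1(s) z(s) K^x_{i1} ds,
     z(t)   = xi    + g0 \int_0^t D1(s) h_1(s) ds,
     Phi_ij(t) = E[h_i(t) h_j(t)],  G(t) = E[z(t)^2],
     K_ij = Phi_ij + G K^x_ij,
     d/dt D_i(t) = - K_i1(t) D_1(t),  D_i(0) = y.                             *)
Definition dmft_solution {R : realType} {d} {T : measurableType d}
  (P : probability T R) (rho y g0 : R) (chi1 chi2 xi : T -> R)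
  (D1 D2 : R -> R) (h1 h2 z : R -> T -> R) : Prop :=
  let Phi11 := fun t => Exp P (fun w => h1 t w * h1 t w) in
  let Phi21 := fun t => Exp P (fun w => h2 t w * h1 t w) in
  let G := fun t => Exp P (fun w => z t w ^+ 2) in
  let K11 := fun t => Phi11 t + G t * 1 in
  let K21 := fun t => Phi21 t + G t * rho in
  [/\
      (forall (t : R) (w : T), 0 <= t ->
        [/\ tintegrable (fun s => D1 s * z s w * 1) t,
            tintegrable (fun s => D1 s * z s w * rho) t &
            tintegrable (fun s => D1 s * h1 s w) t] /\
        [/\ h1 t w = chi1 w + g0 * tint (fun s => D1 s * z s w * 1) t,
            h2 t w = chi2 w + g0 * tint (fun s => D1 s * z s w * rho) t &
            z t w = xi w + g0 * tint (fun s => D1 s * h1 s w) t]),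
      (forall t : R, 0 <= t ->
        [/\ P.-integrable setT (EFin \o (fun w => h1 t w * h1 t w)),
            P.-integrable setT (EFin \o (fun w => h2 t w * h1 t w)) &
            P.-integrable setT (EFin \o (fun w => z t w ^+ 2))]),
      (forall t : R, 0 < t ->
        is_derive t 1 D1 (- (K11 t * D1 t)) /\
        is_derive t 1 D2 (- (K21 t * D1 t))),
      (D1 0 = y /\ D2 0 = y) &
      (D1 t @[t --> 0^'+] --> y) /\ (D2 t @[t --> 0^'+] --> y)].

Definition bigO3_0 {R : realType} (f : R -> R) : Prop :=
  exists C delta : R, 0 < delta /\
    forall g, 0 < g < delta -> `|f g| <= C * g ^+ 3.

(* Main.v *)
Require Import Defs.
From HB Require Import structures.
From mathcomp Require Import all_boot all_order all_algebra.
From mathcomp Require Import all_classical all_reals all_analysis.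
From mathcomp Require Import normal_distribution measurable_realfun.
From mathcomp Require Import ring lra.
Set Implicit Arguments. Unset Strict Implicit. Unset Printing Implicit Defensive.
Import Order.TTheory GRing.Theory Num.Theory.
Import numFieldNormedType.Exports.
Local Open Scope classical_set_scope.
Local Open Scope ring_scope.
Section Prob.
Variables (R : realType) (d : measure_display) (T : measurableType d) (P : probability T R).
Variables (rho : R) (chi1 chi2 xi : T -> R).
Hypothesis rho01 : 0 <= rho <= 1.
Hypothesis HG : init_gaussian P rho chi1 chi2 xi.

Definition GX (a b c : R) := fun w => a * chi1 w + b * chi2 w + c * xi w.
Definition GV (a b c : R) := a ^+ 2 + b ^+ 2 + c ^+ 2 + 2 * a * b * rho.

Lemma mGX a b c : measurable_fun setT (GX a b c).
Proof.
case: HG => m1 m2 m3 _; rewrite /GX.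
apply: measurable_funD; [apply: measurable_funD|];
  apply: measurable_funM => //; exact: measurable_cst.
Qed.

Lemma GV_ge0 a b c : 0 <= GV a b c.
Proof.
case/andP: rho01 => r0 r1; rewrite /GV.
have h : 0 <= (1 - rho) * (a ^+ 2 + b ^+ 2) + rho * (a + b) ^+ 2 + c ^+ 2.
  apply: addr_ge0; last exact: sqr_ge0.
  apply: addr_ge0; apply: mulr_ge0 => //; try lra; try exact: sqr_ge0.
  by apply: addr_ge0; exact: sqr_ge0.
suff -> : a ^+ 2 + b ^+ 2 + c ^+ 2 + 2 * a * b * rho =
  (1 - rho) * (a ^+ 2 + b ^+ 2) + rho * (a + b) ^+ 2 + c ^+ 2 by [].
by ring.
Qed.

Lemma law1 a b c A : GV a b c = 1 -> measurable A ->
  P (GX a b c @^-1` A) = normal_prob 0 1 A.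
Proof.
move=> V1 mA; case: HG => _ _ _ /(_ a b c).
by rewrite /centered_normal_law -/(GV a b c) V1 ltr01 sqrtr1 => /(_ A mA).
Qed.

Definition GM a b c := (\int[P]_w ((GX a b c w) ^+ 2)%:E)%E.

Lemma mf2 : measurable_fun setT (fun y : R => (y ^+ 2)%:E).
Proof. apply/measurable_EFinP; exact: exprn_measurable. Qed.

Lemma GM_push a b c : GM a b c =
  (\int[pushforward P (GX a b c)]_(y in setT) (y ^+ 2)%:E)%E.
Proof.
have h0 : {in setT, forall y : R, (0 <= (y ^+ 2)%:E)%E}.
  by move=> y _; rewrite lee_fin sqr_ge0.
have e := @ge0_integral_pushforward _ _ _ _ _ _ (mGX a b c) P setT
   (fun y : R => (y ^+ 2)%:E) measurableT mf2 h0.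
by rewrite e preimage_setT.
Qed.

Lemma GM_eq a b c : GV a b c = 1 -> GM a b c = GM 1 0 0.
Proof.
move=> V1.
have V100 : GV 1 0 0 = 1 by rewrite /GV; ring.
rewrite !GM_push; apply: (eq_measure_integral (pushforward P (GX 1 0 0))).
- exact: mGX.
- exact: mGX.
move=> _ _ B mB _ /=.
by rewrite /pushforward law1 // law1.
Qed.

End Prob.
Section Prob2.
Variables (R : realType) (d : measure_display) (T : measurableType d) (P : probability T R).
Variables (rho : R) (chi1 chi2 xi : T -> R).
Hypothesis rho01 : 0 <= rho <= 1.
Hypothesis HG : init_gaussian P rho chi1 chi2 xi.
Hypothesis Hint1 : P.-integrable setT (EFin \o (fun w => chi1 w * chi1 w)).

Local Notation GX := (GX chi1 chi2 xi).
Local Notation GV := (GV rho).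
Local Notation GM := (GM P chi1 chi2 xi).

Lemma GM100E' : GM 1 0 0 = (\int[P]_w ((chi1 w * chi1 w)%:E))%E.
Proof.
by apply: eq_integral => w _; rewrite /GX mul1r !mul0r !addr0 expr2.
Qed.

Lemma GM100_fin : GM 1 0 0 \is a fin_num.
Proof. by rewrite GM100E'; exact: integrable_fin_num Hint1. Qed.

Definition gmu := fine (GM 1 0 0).

Lemma GM100E : GM 1 0 0 = gmu%:E.
Proof. by rewrite /gmu fineK // GM100_fin. Qed.

Lemma mGX2 a b c : measurable_fun setT (fun w => ((GX a b c w) ^+ 2)%:E).
Proof. apply/measurable_EFinP; apply: measurable_funX; exact: (mGX HG). Qed.

Lemma GM_V a b c : GM a b c = (GV a b c * gmu)%:E.
Proof.
have [Vp|V0] := ltrP 0 (GV a b c).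
  set s := Num.sqrt (GV a b c).
  have s0 : 0 < s by rewrite sqrtr_gt0.
  have sn0 : s != 0 by rewrite gt_eqF.
  have ss : s ^+ 2 = GV a b c by rewrite sqr_sqrtr // ltW.
  have V1 : GV (a / s) (b / s) (c / s) = 1.
    have -> : GV (a / s) (b / s) (c / s) = GV a b c / s ^+ 2.
      by rewrite /GV; field.
    by rewrite ss divff // gt_eqF.
  have e w : ((GX a b c w) ^+ 2)%:E = ((s ^+ 2)%:E *
     ((GX (a / s) (b / s) (c / s) w) ^+ 2)%:E)%E.
    by rewrite -EFinM; congr EFin; rewrite /GX; field.
  rewrite /GM; under eq_integral => w _ do rewrite e.
  rewrite ge0_integralZl_EFin //; first last.
  - by rewrite sqr_ge0.
  - exact: mGX2.
  - by move=> x _; rewrite lee_fin sqr_ge0.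
  by rewrite -/(GM _ _ _) (GM_eq HG) // GM100E -EFinM ss.
have V00 : GV a b c = 0 by apply/eqP; rewrite eq_le V0 GV_ge0.
rewrite V00 mul0r.
have law0 : P [set w | GX a b c w = 0] = 1%E.
  case: HG => _ _ _ /(_ a b c).
  by rewrite /centered_normal_law -/(GV a b c) V00 ltxx.
have mZ : measurable [set w | GX a b c w = 0].
  rewrite -[X in measurable X]setTI.
  exact: (mGX HG a b c measurableT (measurable_set1 0)).
rewrite /GM (ae_eq_integral (cst 0%E)) //; first last.
- exists (~` [set w | GX a b c w = 0]); split.
  + exact: measurableC.
  + by have := probability_setC P mZ; rewrite law0 subee.
  + by move=> w /= h; apply: contra_not h => -> _; rewrite expr0n.
- apply/measurable_EFinP; apply: measurable_funX; exact: (mGX HG).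
- by rewrite integral0.
Qed.

End Prob2.
Section Prob3.
Variables (R : realType) (d : measure_display) (T : measurableType d) (P : probability T R).
Variables (rho : R) (chi1 chi2 xi : T -> R).
Hypothesis rho01 : 0 <= rho <= 1.
Hypothesis HG : init_gaussian P rho chi1 chi2 xi.
Hypothesis Hint1 : P.-integrable setT (EFin \o (fun w => chi1 w * chi1 w)).

Local Notation GX := (GX chi1 chi2 xi).
Local Notation GV := (GV rho).
Local Notation GM := (GM P chi1 chi2 xi).
Local Notation gmu := (gmu P chi1 chi2 xi).

Lemma GX2_int a b c : P.-integrable setT (EFin \o (fun w => GX a b c w ^+ 2)).
Proof.
apply/integrableP; split.
  by apply/measurable_EFinP; apply: measurable_funX; exact: (mGX HG).
rewrite (eq_integral (fun w => ((GX a b c w) ^+ 2)%:E)); last first.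
  by move=> w _ /=; rewrite ger0_norm // sqr_ge0.
by rewrite -/(GM a b c) (GM_V rho01 HG Hint1) ltry.
Qed.

Definition GB a1 b1 c1 a2 b2 c2 :=
  a1 * a2 + b1 * b2 + c1 * c2 + (a1 * b2 + b1 * a2) * rho.

Lemma GXX a1 b1 c1 a2 b2 c2 :
  ('E_P[fun w => (GX a1 b1 c1 w * GX a2 b2 c2 w)%R] =
  (GB a1 b1 c1 a2 b2 c2 * gmu)%:E)%E.
Proof.
pose A := fun w => GX (a1 + a2) (b1 + b2) (c1 + c2) w ^+ 2.
pose B := fun w => GX (a1 - a2) (b1 - b2) (c1 - c2) w ^+ 2.
have e w : ((GX a1 b1 c1 w * GX a2 b2 c2 w)%:E =
   (4^-1)%:E * ((A w)%:E - (B w)%:E))%E.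
  by rewrite -EFinB -EFinM; congr EFin; rewrite /A /B /GX; field.
rewrite unlock; under eq_integral => w _ do rewrite e.
rewrite integralZl //; last first.
  by apply: integrableB => //; [exact: GX2_int|exact: GX2_int].
rewrite integralB_EFin //; [|exact: GX2_int|exact: GX2_int].
rewrite /A /B -!/(GM _ _ _) !(GM_V rho01 HG Hint1) -EFinB -EFinM.
by congr EFin; rewrite /GV /GB; field.
Qed.

Lemma ExpXX a1 b1 c1 a2 b2 c2 :
  Exp P (fun w => GX a1 b1 c1 w * GX a2 b2 c2 w) = GB a1 b1 c1 a2 b2 c2 * gmu.
Proof. by rewrite /Exp GXX. Qed.

End Prob3.
Section Prob4.
Variables (R : realType) (d : measure_display) (T : measurableType d) (P : probability T R).
Variables (rho : R) (chi1 chi2 xi : T -> R).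
Hypothesis rho01 : 0 <= rho <= 1.
Hypothesis HG : init_gaussian P rho chi1 chi2 xi.
Hypothesis Hint1 : P.-integrable setT (EFin \o (fun w => chi1 w * chi1 w)).

Local Notation GX := (GX chi1 chi2 xi).
Local Notation GV := (GV rho).
Local Notation GM := (GM P chi1 chi2 xi).
Local Notation gmu := (gmu P chi1 chi2 xi).

Lemma gmu_gt0 : 0 < gmu.
Proof.
have V100 : GV 1 0 0 = 1 by rewrite /GV; ring.
have g0 : 0 <= gmu.
  rewrite /gmu fine_ge0 //; by apply: integral_ge0 => w _; rewrite lee_fin sqr_ge0.
have [//|gneg|g00] := ltgtP 0 gmu; first by move: g0; rewrite leNgt gneg.
have G0 : GM 1 0 0 = 0%E by rewrite (GM100E chi2 xi Hint1) -g00.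
have mf : measurable_fun setT (fun w => ((GX 1 0 0 w) ^+ 2)%:E).
  by apply/measurable_EFinP; apply: measurable_funX; exact: (mGX HG).
have h0 : (\int[P]_(x in setT) `|((GX 1 0 0 x) ^+ 2)%:E|)%E = 0%E.
  rewrite -G0; apply: eq_integral => w _ /=; by rewrite ger0_norm // sqr_ge0.
have [N [mN PN0 sN]] := (ae_eq_integral_abs P measurableT mf).1 h0.
have mZ : measurable [set w | GX 1 0 0 w = 0].
  rewrite -[X in measurable X]setTI.
  exact: (mGX HG 1 0 0 measurableT (measurable_set1 0)).
have PZ : P [set w | GX 1 0 0 w = 0] = 0%E.
  have := law1 HG V100 (measurable_set1 (0:R)).
  rewrite /preimage /= => ->.
  have nul : (@lebesgue_measure R).-null_set [set (0:R)].
    move=> A mA A0; apply/eqP; rewrite eq_le measure_ge0 andbT.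
    by rewrite -(lebesgue_measure_set1 (0:R)) le_measure // inE.
  exact: (normal_prob_dominates 0 1 nul).
have : (P setT <= P N + P [set w | (GX 1 0 0 w = 0)%R])%E.
  apply: le_trans (measureU2 _ _ _) => //.
  apply: le_measure; rewrite ?inE //; first exact: measurableU.
  move=> w _; have [h|h] := eqVneq (GX 1 0 0 w) 0; [right => //|left].
  apply: sN => /= /(_ I) /eqP; rewrite eqe sqrf_eq0.
  by apply/negP.
by rewrite PN0 PZ adde0 probability_setT lee_fin ler10.
Qed.

End Prob4.
Section Ana.
Variable R : realType.
Implicit Types (F G f : R -> R).

Definition C0 F := {within `[0, +oo[, continuous F}.

Lemma near_pos (x : R) : 0 < x -> \forall t \near x, 0 < t.
Proof. move=> x0; exact: lt_nbhsr. Qed.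

Lemma C0_interior F x : C0 F -> 0 < x -> {for x, continuous F}.
Proof.
move=> /continuous_within_itvcyP[h _] x0; apply: h.
by rewrite in_itv /= x0.
Qed.

Lemma C0_right F : C0 F -> F t @[t --> 0^'+] --> F 0.
Proof. by move=> /continuous_within_itvcyP[_ h]. Qed.

Lemma C0_mk F : (forall x, 0 < x -> {for x, continuous F}) ->
  F t @[t --> 0^'+] --> F 0 -> C0 F.
Proof.
move=> h1 h2; apply/continuous_within_itvcyP; split => //.
by move=> x; rewrite in_itv /= andbT; exact: h1.
Qed.

Lemma C0_eq F G : (forall t, 0 <= t -> F t = G t) -> C0 F -> C0 G.
Proof.
move=> e cF; apply: C0_mk.
  move=> x x0; rewrite /prop_for /continuous_at -(e x (ltW x0)).
  apply: cvg_trans (C0_interior cF x0); apply: near_eq_cvg.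
  by apply: filterS (near_pos x0) => t t0; rewrite e // ltW.
rewrite -(e 0 (lexx 0)); apply: cvg_trans (C0_right cF).
apply: near_eq_cvg; near=> t.
have t0 : 0 < t by near: t; exact: nbhs_right_gt.
by rewrite e // ltW.
Unshelve. all: by end_near. Qed.

Lemma C0_derivable F : (forall x, 0 < x -> derivable F x 1) ->
  F t @[t --> 0^'+] --> F 0 -> C0 F.
Proof.
move=> h1 h2; apply: C0_mk => // x x0.
by apply/differentiable_continuous; rewrite -derivable1_diffP; exact: h1.
Qed.

Lemma C0D F G : C0 F -> C0 G -> C0 (fun t => F t + G t).
Proof. by move=> cF cG x; apply: cvgD; [exact: cF|exact: cG]. Qed.

Lemma C0B F G : C0 F -> C0 G -> C0 (fun t => F t - G t).
Proof. by move=> cF cG x; apply: cvgB; [exact: cF|exact: cG]. Qed.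

Lemma C0M F G : C0 F -> C0 G -> C0 (fun t => F t * G t).
Proof. by move=> cF cG x; apply: cvgM; [exact: cF|exact: cG]. Qed.

Lemma C0cst (c : R) : C0 (fun _ => c).
Proof. by move=> x; exact: cvg_cst. Qed.

Lemma C0id : C0 (fun t => t).
Proof. by apply: continuous_subspaceT => x. Qed.

Lemma C0exp F : C0 F -> C0 (fun t => expR (F t)).
Proof.
move=> cF x; apply: (continuous_comp (cF x)); exact: continuous_expR.
Qed.

Lemma C0_itv F t : C0 F -> {within `[0, t], continuous F}.
Proof.
apply: continuous_subspaceW => s /=; rewrite !in_itv /= => /andP[-> _].
by [].
Qed.

Lemma tint0 f : tint f 0 = 0.
Proof. by rewrite /tint set_itv1 Rintegral_set1. Qed.

Lemma C0_tint f : (forall u, 0 <= u -> tintegrable f u) -> C0 (tint f).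
Proof.
move=> hi; apply: C0_mk.
  move=> x x0.
  have hc := @parameterized_integral_continuous R 0 (x + 1) f
    (ltW (addr_gt0 x0 ltr01)) (hi _ (ltW (addr_gt0 x0 ltr01))).
  apply: (within_continuous_continuous _ hc).
    exact: addr_gt0 x0 ltr01.
  by rewrite in_itv /= x0 ltrDl ltr01.
have hc := @parameterized_integral_continuous R 0 1 f ler01 (hi _ ler01).
by have /(continuous_within_itvP _ ltr01)[_ h _] := hc.
Qed.

Lemma tint_derive f (x : R) : 0 < x -> (forall u, 0 <= u -> tintegrable f u) ->
  {for x, continuous f} -> is_derive x 1 (tint f) (f x).
Proof.
move=> x0 hi cf.
have xu : x < x + 1 by rewrite ltrDl ltr01.
have [dF eF] := @continuous_FTC1_closed R f 0 x (x + 1) xu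
  (hi _ (ltW (addr_gt0 x0 ltr01))) x0 cf.
apply: DeriveDef; first exact: dF.
by rewrite -derive1E.
Qed.

Lemma C0_tintegrable F (u : R) : C0 F -> 0 <= u -> tintegrable F u.
Proof.
move=> cF u0; apply: continuous_compact_integrable.
  exact: segment_compact.
exact: C0_itv.
Qed.

Lemma is_derive_near F G (x d : R) : 0 < x -> (forall t, 0 < t -> F t = G t) ->
  is_derive x 1 F d -> is_derive x 1 G d.
Proof.
move=> x0 e; apply: near_eq_is_derive.
by apply: filterS (near_pos x0) => t t0; rewrite e.
Qed.

Lemma is_derive_expRc F (x d : R) : is_derive x 1 F d ->
  is_derive x 1 (fun t => expR (F t)) (expR (F x) * d).
Proof.
move=> hF.
have dF : derivable F x 1 by case: hF.
have vF : 'D_1 F x = d by case: hF.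
have dc : derivable (expR \o F) x 1.
  apply/derivable1_diffP; apply: differentiable_comp.
    by apply/derivable1_diffP.
  by apply/derivable1_diffP; exact: derivable_expR.
apply: DeriveDef => //.
have de : derivable expR (F x) 1 by exact: derivable_expR.
rewrite -derive1E (derive1_comp dF de) !derive1E.
rewrite vF; congr (_ * _); by have [_ ->] := is_derive_expR (F x).
Qed.

Lemma MVT0 F (dF : R -> R) (t : R) : 0 <= t -> C0 F ->
  (forall x : R, 0 < x -> is_derive x 1 F (dF x)) ->
  exists2 c, 0 <= c & F t - F 0 = dF c * t.
Proof.
move=> t0 cF hd.
have hd' : forall x, x \in `]0, t[ -> is_derive x 1 F (dF x).
  by move=> x; rewrite in_itv /= => /andP[x0 _]; exact: hd.
have [c] := @MVT_segment R F dF 0 t t0 hd' (C0_itv cF).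
move=> hc ->; exists c; last by rewrite subr0.
by move: hc; rewrite in_itv /= => /andP[].
Qed.

Lemma isdD F G (x dF dG : R) : is_derive x 1 F dF -> is_derive x 1 G dG ->
  is_derive x 1 (fun t => F t + G t) (dF + dG).
Proof. by move=> hF hG; exact: (is_deriveD hF hG). Qed.

Lemma isdB F G (x dF dG : R) : is_derive x 1 F dF -> is_derive x 1 G dG ->
  is_derive x 1 (fun t => F t - G t) (dF - dG).
Proof. by move=> hF hG; exact: (is_deriveB hF hG). Qed.

Lemma isdM F G (x dF dG : R) : is_derive x 1 F dF -> is_derive x 1 G dG ->
  is_derive x 1 (fun t => F t * G t) (F x * dG + G x * dF).
Proof. by move=> hF hG; exact: (is_deriveM hF hG). Qed.

Lemma isdZ (k : R) F (x dF : R) : is_derive x 1 F dF ->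
  is_derive x 1 (fun t => k * F t) (k * dF).
Proof. by move=> hF; exact: (is_deriveZ k hF). Qed.

Lemma isdC (c x : R) : is_derive x 1 (fun _ => c) 0.
Proof. exact: is_derive_cst. Qed.

Lemma isdI (x : R) : is_derive x 1 (fun t => t) 1.
Proof. exact: is_derive_id. Qed.

Lemma C0N F : C0 F -> C0 (fun t => - F t).
Proof. by move=> cF x; apply: cvgN; exact: cF. Qed.

Lemma isdN F (x dF : R) : is_derive x 1 F dF ->
  is_derive x 1 (fun t => - F t) (- dF).
Proof. by move=> hF; exact: (is_deriveN hF). Qed.

Lemma const0 F : C0 F -> (forall x : R, 0 < x -> is_derive x 1 F 0) ->
  forall t, 0 <= t -> F t = F 0.
Proof.
move=> cF hd t t0.
have [c _] := @MVT0 F (fun _ => 0) t t0 cF hd.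
by move/eqP; rewrite mul0r subr_eq0 => /eqP.
Qed.

Lemma expRNK (a b : R) : b * expR (- a) * expR a = b.
Proof. by rewrite -mulrA [expR (- a) * _]mulrC expRxMexpNx_1 mulr1. Qed.

Lemma expRKN (a b : R) : b * expR a * expR (- a) = b.
Proof. by rewrite -mulrA expRxMexpNx_1 mulr1. Qed.

End Ana.
Section Dyn.
Variables (R : realType) (d : measure_display) (T : measurableType d) (P : probability T R).
Variables (rho y g : R) (chi1 chi2 xi : T -> R) (D1 D2 : R -> R) (h1 h2 z : R -> T -> R).
Hypothesis rho01 : 0 <= rho <= 1.
Hypothesis HG : init_gaussian P rho chi1 chi2 xi.
Hypothesis g0 : 0 < g.
Hypothesis Hd : dmft_solution P rho y g chi1 chi2 xi D1 D2 h1 h2 z.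

Lemma Hpath w t : 0 <= t ->
  [/\ tintegrable (fun s => D1 s * z s w * 1) t,
      tintegrable (fun s => D1 s * z s w * rho) t &
      tintegrable (fun s => D1 s * h1 s w) t] /\
  [/\ h1 t w = chi1 w + g * tint (fun s => D1 s * z s w * 1) t,
      h2 t w = chi2 w + g * tint (fun s => D1 s * z s w * rho) t &
      z t w = xi w + g * tint (fun s => D1 s * h1 s w) t].
Proof. by case: Hd => H _ _ _ _; exact: H. Qed.

Lemma Hinteg t : 0 <= t -> P.-integrable setT (EFin \o (fun w => h1 t w * h1 t w)).
Proof. by case: Hd => _ H _ _ _ t0; have [] := H t t0. Qed.

Lemma Hder (t : R) : 0 < t ->
  is_derive t 1 D1 (- ((Exp P (fun w => h1 t w * h1 t w) +
                         Exp P (fun w => z t w ^+ 2) * 1) * D1 t)) /\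
  is_derive t 1 D2 (- ((Exp P (fun w => h2 t w * h1 t w) +
                         Exp P (fun w => z t w ^+ 2) * rho) * D1 t)).
Proof. by case: Hd => _ _ H _ _; exact: H. Qed.

Lemma Hinit : D1 0 = y /\ D2 0 = y.
Proof. by case: Hd. Qed.

Lemma Hlim : (D1 t @[t --> 0^'+] --> y) /\ (D2 t @[t --> 0^'+] --> y).
Proof. by case: Hd. Qed.

Lemma C0D1 : C0 D1.
Proof.
apply: C0_derivable; last by rewrite Hinit.1; exact: Hlim.1.
by move=> x x0; have [[]] := Hder x0.
Qed.

Lemma C0D2 : C0 D2.
Proof.
apply: C0_derivable; last by rewrite Hinit.2; exact: Hlim.2.
by move=> x x0; have [_ []] := Hder x0.
Qed.

Lemma C0h1 w : C0 (fun t => h1 t w).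
Proof.
apply: (C0_eq (F := fun t => chi1 w + g * tint (fun s => D1 s * z s w * 1) t)).
  by move=> t t0; have [_ [-> _ _]] := Hpath w t0.
apply: C0D; first exact: C0cst.
apply: C0M; first exact: C0cst.
by apply: C0_tint => u u0; have [[? _ _] _] := Hpath w u0.
Qed.

Lemma C0h2 w : C0 (fun t => h2 t w).
Proof.
apply: (C0_eq (F := fun t => chi2 w + g * tint (fun s => D1 s * z s w * rho) t)).
  by move=> t t0; have [_ [_ -> _]] := Hpath w t0.
apply: C0D; first exact: C0cst.
apply: C0M; first exact: C0cst.
by apply: C0_tint => u u0; have [[_ ? _] _] := Hpath w u0.
Qed.

Lemma C0z w : C0 (fun t => z t w).
Proof.
apply: (C0_eq (F := fun t => xi w + g * tint (fun s => D1 s * h1 s w) t)).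
  by move=> t t0; have [_ [_ _ ->]] := Hpath w t0.
apply: C0D; first exact: C0cst.
apply: C0M; first exact: C0cst.
by apply: C0_tint => u u0; have [[_ _ ?] _] := Hpath w u0.
Qed.

Lemma dh1 w (x : R) : 0 < x -> is_derive x 1 (fun t => h1 t w) (g * (D1 x * z x w * 1)).
Proof.
move=> x0.
apply: (is_derive_near (F := fun t => chi1 w + g * tint (fun s => D1 s * z s w * 1) t)) => //.
  by move=> t t0; have [_ [-> _ _]] := Hpath w (ltW t0).
apply: is_derive_eq; first apply: isdD (isdC _ _) (isdZ g (tint_derive x0 _ _)).
- by move=> u u0; have [[? _ _] _] := Hpath w u0.
- apply: C0_interior x0; apply: C0M; last exact: C0cst.
  by apply: C0M; [exact: C0D1|exact: C0z].
- by rewrite add0r.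
Qed.

Lemma dh2 w (x : R) : 0 < x -> is_derive x 1 (fun t => h2 t w) (g * (D1 x * z x w * rho)).
Proof.
move=> x0.
apply: (is_derive_near (F := fun t => chi2 w + g * tint (fun s => D1 s * z s w * rho) t)) => //.
  by move=> t t0; have [_ [_ -> _]] := Hpath w (ltW t0).
apply: is_derive_eq; first apply: isdD (isdC _ _) (isdZ g (tint_derive x0 _ _)).
- by move=> u u0; have [[_ ? _] _] := Hpath w u0.
- apply: C0_interior x0; apply: C0M; last exact: C0cst.
  by apply: C0M; [exact: C0D1|exact: C0z].
- by rewrite add0r.
Qed.

Lemma dz w (x : R) : 0 < x -> is_derive x 1 (fun t => z t w) (g * (D1 x * h1 x w)).
Proof.
move=> x0.
apply: (is_derive_near (F := fun t => xi w + g * tint (fun s => D1 s * h1 s w) t)) => //.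
  by move=> t t0; have [_ [_ _ ->]] := Hpath w (ltW t0).
apply: is_derive_eq; first apply: isdD (isdC _ _) (isdZ g (tint_derive x0 _ _)).
- by move=> u u0; have [[_ _ ?] _] := Hpath w u0.
- apply: C0_interior x0.
  by apply: C0M; [exact: C0D1|exact: C0h1].
- by rewrite add0r.
Qed.

Definition U t := g * tint D1 t.

Lemma C0U : C0 U.
Proof.
apply: C0M; first exact: C0cst.
apply: C0_tint => u u0; exact: C0_tintegrable C0D1 u0.
Qed.

Lemma dU (x : R) : 0 < x -> is_derive x 1 U (g * D1 x).
Proof.
move=> x0; rewrite /U; apply: isdZ.
have h1' : forall u, 0 <= u -> tintegrable D1 u.
  by move=> u u0; exact: C0_tintegrable C0D1 u0.
exact: (tint_derive x0 h1' (C0_interior C0D1 x0)).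
Qed.

Lemma U0 : U 0 = 0.
Proof. by rewrite /U tint0 mulr0. Qed.

Lemma h10 w : h1 0 w = chi1 w.
Proof. by have [_ [-> _ _]] := Hpath w (lexx 0); rewrite tint0 mulr0 addr0. Qed.
Lemma h20 w : h2 0 w = chi2 w.
Proof. by have [_ [_ -> _]] := Hpath w (lexx 0); rewrite tint0 mulr0 addr0. Qed.
Lemma z0 w : z 0 w = xi w.
Proof. by have [_ [_ _ ->]] := Hpath w (lexx 0); rewrite tint0 mulr0 addr0. Qed.

Lemma path1 w t : 0 <= t -> (h1 t w + z t w) * expR (- U t) = chi1 w + xi w.
Proof.
move=> t0.
have -> : chi1 w + xi w = (h1 0 w + z 0 w) * expR (- U 0).
  by rewrite h10 z0 U0 oppr0 expR0 mulr1.
apply: (const0 (F := fun t => (h1 t w + z t w) * expR (- U t))) => //.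
  apply: C0M; first by apply: C0D; [exact: C0h1|exact: C0z].
  by apply: C0exp; apply: C0N; exact: C0U.
move=> x x0.
apply: is_derive_eq.
  apply: isdM; first by apply: isdD; [exact: dh1|exact: dz].
  by apply: is_derive_expRc; apply: isdN; exact: dU.
by rewrite /=; ring.
Qed.

Lemma path2 w t : 0 <= t -> (h1 t w - z t w) * expR (U t) = chi1 w - xi w.
Proof.
move=> t0.
have -> : chi1 w - xi w = (h1 0 w - z 0 w) * expR (U 0).
  by rewrite h10 z0 U0 expR0 mulr1.
apply: (const0 (F := fun t => (h1 t w - z t w) * expR (U t))) => //.
  apply: C0M; first by apply: C0B; [exact: C0h1|exact: C0z].
  by apply: C0exp; exact: C0U.
move=> x x0.
apply: is_derive_eq.
  apply: isdM; first by apply: isdB; [exact: dh1|exact: dz].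
  by apply: is_derive_expRc; exact: dU.
by rewrite /=; ring.
Qed.

Lemma path3 w t : 0 <= t -> h2 t w - rho * h1 t w = chi2 w - rho * chi1 w.
Proof.
move=> t0.
have -> : chi2 w - rho * chi1 w = h2 0 w - rho * h1 0 w by rewrite h10 h20.
apply: (const0 (F := fun t => h2 t w - rho * h1 t w)) => //.
  apply: C0B; first exact: C0h2.
  by apply: C0M; [exact: C0cst|exact: C0h1].
move=> x x0.
apply: is_derive_eq.
  by apply: isdB; [exact: dh2|apply: isdZ; exact: dh1].
by ring.
Qed.

Definition ch t := (expR (U t) + expR (- U t)) / 2.
Definition sh t := (expR (U t) - expR (- U t)) / 2.

Lemma pq t : expR (U t) * expR (- U t) = 1.
Proof. exact: expRxMexpNx_1. Qed.

Lemma h1E t : 0 <= t -> h1 t = GX chi1 chi2 xi (ch t) 0 (sh t).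
Proof.
move=> t0; apply/funext => w.
have e1 := path1 w t0; have e2 := path2 w t0.
have s1 : h1 t w + z t w = (chi1 w + xi w) * expR (U t).
  by rewrite -e1 -mulrA (mulrC (expR (- U t))) pq mulr1.
have s2 : h1 t w - z t w = (chi1 w - xi w) * expR (- U t).
  by rewrite -e2 -mulrA pq mulr1.
have -> : h1 t w = ((h1 t w + z t w) + (h1 t w - z t w)) / 2 by field.
by rewrite s1 s2 /GX /ch /sh; field.
Qed.

Lemma zE t : 0 <= t -> z t = GX chi1 chi2 xi (sh t) 0 (ch t).
Proof.
move=> t0; apply/funext => w.
have e1 := path1 w t0; have e2 := path2 w t0.
have s1 : h1 t w + z t w = (chi1 w + xi w) * expR (U t).
  by rewrite -e1 -mulrA (mulrC (expR (- U t))) pq mulr1.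
have s2 : h1 t w - z t w = (chi1 w - xi w) * expR (- U t).
  by rewrite -e2 -mulrA pq mulr1.
have -> : z t w = ((h1 t w + z t w) - (h1 t w - z t w)) / 2 by field.
by rewrite s1 s2 /GX /ch /sh; field.
Qed.

Lemma h2E t : 0 <= t -> h2 t = GX chi1 chi2 xi (rho * ch t - rho) 1 (rho * sh t).
Proof.
move=> t0; apply/funext => w.
have e3 := path3 w t0.
have -> : h2 t w = (h2 t w - rho * h1 t w) + rho * h1 t w by ring.
by rewrite e3 (h1E t0) /GX; ring.
Qed.

Lemma Hint1 : P.-integrable setT (EFin \o (fun w => chi1 w * chi1 w)).
Proof.
have := Hinteg (lexx 0).
by rewrite (_ : (fun w => h1 0 w * h1 0 w) = (fun w => chi1 w * chi1 w)) //;
  apply/funext => w; rewrite h10.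
Qed.

Local Notation mu := (gmu P chi1 chi2 xi).

Definition kk t := mu * (expR (U t) ^+ 2 + expR (- U t) ^+ 2).

Lemma K11E t : 0 <= t ->
  Exp P (fun w => h1 t w * h1 t w) + Exp P (fun w => z t w ^+ 2) * 1 = kk t.
Proof.
move=> t0; rewrite (h1E t0) (zE t0).
rewrite (_ : (fun w => GX chi1 chi2 xi (sh t) 0 (ch t) w ^+ 2) =
   (fun w => GX chi1 chi2 xi (sh t) 0 (ch t) w * GX chi1 chi2 xi (sh t) 0 (ch t) w));
  last by apply/funext => w; rewrite expr2.
rewrite !(ExpXX rho01 HG Hint1) /GB /kk /ch /sh.
have e := pq t.
rewrite mulr1; set p := expR (U t); set q := expR (- U t).
rewrite -[_ * mu + _ * mu]mulrDl mulrC; congr (_ * _).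
by field.
Qed.

Lemma K21E t : 0 <= t ->
  Exp P (fun w => h2 t w * h1 t w) + Exp P (fun w => z t w ^+ 2) * rho = rho * kk t.
Proof.
move=> t0; rewrite (h1E t0) (zE t0) (h2E t0).
rewrite (_ : (fun w => GX chi1 chi2 xi (sh t) 0 (ch t) w ^+ 2) =
   (fun w => GX chi1 chi2 xi (sh t) 0 (ch t) w * GX chi1 chi2 xi (sh t) 0 (ch t) w));
  last by apply/funext => w; rewrite expr2.
rewrite !(ExpXX rho01 HG Hint1) /GB /kk /ch /sh.
set p := expR (U t); set q := expR (- U t).
by field.
Qed.

Lemma dD1 (x : R) : 0 < x -> is_derive x 1 D1 (- (kk x * D1 x)).
Proof. by move=> x0; have [h _] := Hder x0; rewrite K11E ?ltW in h. Qed.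

Lemma dD2 (x : R) : 0 < x -> is_derive x 1 D2 (- (rho * kk x * D1 x)).
Proof. by move=> x0; have [_ h] := Hder x0; rewrite K21E ?ltW in h. Qed.

Lemma D2E t : 0 <= t -> D2 t = y - rho * y + rho * D1 t.
Proof.
move=> t0.
have e : D2 t - rho * D1 t = y - rho * y.
  have cF : C0 (fun t => D2 t - rho * D1 t).
    apply: C0B; first exact: C0D2.
    by apply: C0M; [exact: C0cst|exact: C0D1].
  have hd : forall x : R, 0 < x -> is_derive x 1 (fun t => D2 t - rho * D1 t) 0.
    move=> x x0; apply: is_derive_eq.
      by apply: isdB; [exact: dD2|apply: isdZ; exact: dD1].
    by ring.
  have /= -> := @const0 R _ cF hd t t0.
  by rewrite Hinit.1 Hinit.2.
by rewrite -e; ring.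
Qed.

Lemma QE t : 0 <= t ->
  D1 t + mu / (2 * g) * (expR (U t) * expR (U t) - expR (- U t) * expR (- U t)) = y.
Proof.
move=> t0.
have gn0 : g != 0 by rewrite gt_eqF.
rewrite (@const0 R (fun t => D1 t + mu / (2 * g) *
   (expR (U t) * expR (U t) - expR (- U t) * expR (- U t))) _ _ t t0).
- by rewrite /= U0 oppr0 expR0 mulr1 subrr mulr0 addr0 Hinit.1.
- apply: C0D; first exact: C0D1.
  apply: C0M; first exact: C0cst.
  have cE : C0 (fun t => expR (U t)) by apply: C0exp; exact: C0U.
  have cN : C0 (fun t => expR (- U t)) by apply: C0exp; apply: C0N; exact: C0U.
  by apply: C0B; apply: C0M.
move=> x x0.
have e1 := is_derive_expRc (dU x0).
have e2 := is_derive_expRc (isdN (dU x0)).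
apply: is_derive_eq.
  apply: isdD; first exact: dD1.
rewrite /kk /= /GRing.scale /=.
by field.
Qed.

Lemma mu_gt0 : 0 < mu.
Proof. exact: (gmu_gt0 HG Hint1). Qed.

Lemma kk_sub c : kk c - 2 * mu = mu * (expR (U c) - expR (- U c)) ^+ 2.
Proof.
rewrite /kk; have e := pq c.
set p := expR (U c) in e *; set q := expR (- U c) in e *.
have -> : 2 * mu = 2 * mu * (p * q) by rewrite e mulr1.
by ring.
Qed.

Lemma kk_ge c : 0 <= kk c - 2 * mu.
Proof.
rewrite kk_sub; apply: mulr_ge0; [exact: ltW mu_gt0|exact: sqr_ge0].
Qed.

Lemma D1sq t : 0 <= t -> D1 t ^+ 2 * expR (4 * mu * t) <= y ^+ 2.
Proof.
move=> t0.
pose F := fun t => D1 t * D1 t * expR (4 * mu * t).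
pose dF := fun c => - (D1 c * D1 c * expR (4 * mu * c)) * 2 * (kk c - 2 * mu).
have cF : C0 F.
  apply: C0M; first by apply: C0M; exact: C0D1.
  by apply: C0exp; apply: C0M; [exact: C0cst|exact: C0id].
have hd : forall x : R, 0 < x -> is_derive x 1 F (dF x).
  move=> x x0.
  have e1 := is_derive_expRc (isdZ (4 * mu) (isdI x)).
  apply: is_derive_eq (isdM (isdM (dD1 x0) (dD1 x0)) e1) _.
  by rewrite /dF /=; ring.
have [c c0 e] := MVT0 t0 cF hd.
have hdc : dF c * t <= 0.
  apply: mulr_le0_ge0 => //.
  have ha : 0 <= D1 c * D1 c * expR (4 * mu * c).
    by apply: mulr_ge0; [rewrite -expr2; exact: sqr_ge0|exact: expR_ge0].
  have hb := kk_ge c.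
  rewrite /dF; nra.
have : F t <= F 0 by rewrite -subr_le0 e.
by rewrite /F mulr0 expR0 mulr1 Hinit.1 -!expr2.
Qed.

Lemma sqr_normE (a : R) : `|a| ^+ 2 = a ^+ 2.
Proof. by rewrite -normrX ger0_norm // sqr_ge0. Qed.

Lemma D1abs t : 0 <= t -> `|D1 t| <= `|y| * expR (- (2 * mu * t)).
Proof.
move=> t0; have h := D1sq t0.
set E := expR (2 * mu * t).
have E0 : 0 < E by exact: expR_gt0.
have e4 : expR (4 * mu * t) = E ^+ 2.
  by rewrite expr2 -expRD; congr expR; ring.
have hh2 : (`|D1 t| * E) ^+ 2 <= `|y| ^+ 2.
  by rewrite exprMn !sqr_normE -e4.
have hh3 : `|D1 t| * E <= `|y|.
  by rewrite -ler_sqr // ?nnegrE // mulr_ge0 // ltW.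
have eE : E * expR (- (2 * mu * t)) = 1 by exact: expRxMexpNx_1.
have -> : `|D1 t| = `|D1 t| * E * expR (- (2 * mu * t)) by rewrite -mulrA eE mulr1.
by apply: ler_wpM2r => //; exact: expR_ge0.
Qed.

Lemma expN_le1 t : 0 <= t -> expR (- (2 * mu * t)) <= 1.
Proof.
move=> t0; rewrite expR_le1 oppr_le0; apply: mulr_ge0 => //.
by apply: mulr_ge0 => //; exact: ltW mu_gt0.
Qed.

Lemma D1le t : 0 <= t -> `|D1 t| <= `|y|.
Proof.
move=> t0; apply: le_trans (D1abs t0) _.
by rewrite ler_piMr // expN_le1.
Qed.

Lemma kk_bound c : 0 <= c -> kk c - 2 * mu <= 4 * g ^+ 2 * y ^+ 2 / mu.
Proof.
move=> c0.
have m0 := mu_gt0.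
have mn0 : mu != 0 by rewrite gt_eqF.
have gn0 : g != 0 by rewrite gt_eqF.
have s2 : (y - D1 c) ^+ 2 <= 4 * y ^+ 2.
  have hD : D1 c ^+ 2 <= y ^+ 2.
    by rewrite -(sqr_normE (D1 c)) -(sqr_normE y) ler_sqr ?nnegrE // D1le.
  have hs := sqr_ge0 (y + D1 c).
  have -> : (y - D1 c) ^+ 2 = 2 * y ^+ 2 + 2 * D1 c ^+ 2 - (y + D1 c) ^+ 2 by ring.
  lra.
have e := pq c; have Q := QE c0.
rewrite kk_sub.
set p := expR (U c) in e Q *; set q := expR (- U c) in e Q *.
have hpq : (p * p - q * q) / 2 = g * (y - D1 c) / mu.
  by rewrite -Q; field; rewrite ?mn0 ?gn0.
have s1 : (p - q) ^+ 2 <= ((p * p - q * q) / 2) ^+ 2.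
  have -> : ((p * p - q * q) / 2) ^+ 2 = (p - q) ^+ 2 + (p - q) ^+ 4 / 4
     + (p - q) ^+ 2 * (p * q - 1).
    by field.
  rewrite e subrr mulr0 addr0 lerDl; apply: mulr_ge0 => //.
  by rewrite (_ : 4%N = (2 * 2)%N) // exprM sqr_ge0.
apply: le_trans (_ : _ <= mu * ((p * p - q * q) / 2) ^+ 2) _.
  by apply: ler_wpM2l => //; exact: ltW.
rewrite hpq.
have -> : mu * (g * (y - D1 c) / mu) ^+ 2 = g ^+ 2 * (y - D1 c) ^+ 2 / mu.
  by field; rewrite ?mn0.
have -> : 4 * g ^+ 2 * y ^+ 2 / mu = g ^+ 2 * (4 * y ^+ 2) / mu by ring.
apply: ler_wpM2r; first by rewrite invr_ge0 ltW.
by apply: ler_wpM2l => //; exact: sqr_ge0.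
Qed.

Lemma D1near t : 0 <= t ->
  `|D1 t - y * expR (- (2 * mu * t))| <=
  4 * g ^+ 2 * `|y| ^+ 3 / mu * t * expR (- (2 * mu * t)).
Proof.
move=> t0.
have m0 := mu_gt0.
pose F := fun t => D1 t * expR (2 * mu * t) - y.
pose dF := fun c => - ((kk c - 2 * mu) * (D1 c * expR (2 * mu * c))).
have cF : C0 F.
  apply: C0B; last exact: C0cst.
  apply: C0M; first exact: C0D1.
  by apply: C0exp; apply: C0M; [exact: C0cst|exact: C0id].
have hd : forall x : R, 0 < x -> is_derive x 1 F (dF x).
  move=> x x0.
  have e1 := is_derive_expRc (isdZ (2 * mu) (isdI x)).
  apply: is_derive_eq (isdB (isdM (dD1 x0) e1) (isdC y x)) _.
  by rewrite /dF /=; ring.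
have [c c0 e] := MVT0 t0 cF hd.
have F0 : F 0 = 0 by rewrite /F mulr0 expR0 mulr1 Hinit.1 subrr.
rewrite F0 subr0 in e.
set K := 4 * g ^+ 2 * `|y| ^+ 3 / mu.
have bd : `|dF c| <= K.
  rewrite /dF normrN normrM ger0_norm ?kk_ge //.
  have b1 : `|D1 c * expR (2 * mu * c)| <= `|y|.
    rewrite normrM (ger0_norm (expR_ge0 _)).
    have eE : expR (- (2 * mu * c)) * expR (2 * mu * c) = 1.
      by rewrite mulrC expRxMexpNx_1.
    apply: le_trans (ler_wpM2r (expR_ge0 _) (D1abs c0)) _.
    by rewrite expRNK.
  have b2 := kk_bound c0.
  have -> : K = (4 * g ^+ 2 * y ^+ 2 / mu) * `|y|.
    by rewrite /K -(sqr_normE y); ring.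
  apply: ler_pM => //; first exact: kk_ge.
have eF : `|F t| <= K * t.
  rewrite e normrM (ger0_norm t0).
  by apply: ler_wpM2r.
have -> : D1 t - y * expR (- (2 * mu * t)) = F t * expR (- (2 * mu * t)).
  by rewrite /F mulrBl expRKN.
rewrite normrM (ger0_norm (expR_ge0 _)).
by apply: ler_wpM2r => //; exact: expR_ge0.
Qed.

End Dyn.
Section Fin.
Variable R : realType.

Lemma L0 (x K del : R) : 0 < del ->
  (forall g, 0 < g -> g < del -> x <= g * K) -> x <= 0.
Proof.
move=> d0 H; rewrite leNgt; apply/negP => x0.
have K1 : 0 < `|K| + 1 by have := normr_ge0 K; lra.
pose g := Num.min (del / 2) (x / (2 * (`|K| + 1))).
have g1 : g <= del / 2 by rewrite /g ge_min lexx.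
have g2 : g <= x / (2 * (`|K| + 1)) by rewrite /g ge_min lexx orbT.
have g0 : 0 < g by rewrite /g lt_min !divr_gt0 // mulr_gt0.
have gd : g < del by lra.
have h := H g g0 gd.
have hK : g * K <= g * `|K| by apply: ler_wpM2l; [exact: ltW|exact: ler_norm].
have g3 : g * (2 * (`|K| + 1)) <= x by rewrite -ler_pdivlMr // mulr_gt0.
have e : g * (2 * (`|K| + 1)) = 2 * (g * `|K|) + 2 * g by ring.
lra.
Qed.

Lemma coefs (a b c M C del : R) : 0 < del ->
  (forall g, 0 < g -> g < del ->
     `|a + g * b + g ^+ 2 * c| <= g ^+ 2 * M + C * g ^+ 3) ->
  [/\ a = 0, b = 0 & `|c| <= M].
Proof.
move=> d0 H.
pose d1 := Num.min del 1.
have d10 : 0 < d1 by rewrite /d1 lt_min d0 ltr01.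
have H1 g : 0 < g -> g < d1 ->
    [/\ `|a + g * b + g ^+ 2 * c| <= g ^+ 2 * M + C * g ^+ 3,
        g ^+ 2 <= g & g ^+ 3 <= g].
  move=> g0; rewrite /d1 lt_min => /andP[gd g1].
  split; first exact: H.
  - by rewrite expr2 ger_pMr // ltW.
  - rewrite exprS ger_pMr // expr_le1 // ltW //.
have sq_ge0' (g : R) : 0 <= g ^+ 2 by exact: sqr_ge0.
have a0 : a = 0.
  apply/normr0_eq0; apply/eqP; rewrite eq_le normr_ge0 andbT.
  apply: (L0 (K := `|M| + `|C| + `|b| + `|c|) d10) => g g0 gd.
  have [h e2 e3] := H1 g g0 gd.
  have i1 : g ^+ 2 * M <= g * `|M|.
    apply: le_trans (_ : g ^+ 2 * `|M| <= _).
      by apply: ler_wpM2l; [exact: sq_ge0'|exact: ler_norm].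
    by apply: ler_wpM2r.
  have i2 : C * g ^+ 3 <= g * `|C|.
    apply: le_trans (_ : `|C| * g ^+ 3 <= _).
      by apply: ler_wpM2r; [rewrite exprn_ge0 // ltW|exact: ler_norm].
    by rewrite mulrC; apply: ler_wpM2r.
  have i3 : `|g * b| = g * `|b| by rewrite normrM ger0_norm // ltW.
  have i4 : `|g ^+ 2 * c| <= g * `|c|.
    by rewrite normrM (ger0_norm (sq_ge0' g)); apply: ler_wpM2r.
  have tri : `|a| <= `|a + g * b + g ^+ 2 * c| + `|g * b| + `|g ^+ 2 * c|.
    have ea : a = (a + g * b + g ^+ 2 * c) - g * b - g ^+ 2 * c by ring.
    rewrite {1}ea; apply: le_trans (ler_normB _ _) _; rewrite lerD2r.
    exact: ler_normB.
  have e : g * (`|M| + `|C| + `|b| + `|c|) =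
    g * `|M| + g * `|C| + g * `|b| + g * `|c| by ring.
  lra.
have b0 : b = 0.
  apply/normr0_eq0; apply/eqP; rewrite eq_le normr_ge0 andbT.
  apply: (L0 (K := `|M| + `|C| + `|c|) d10) => g g0 gd.
  have [h e2 e3] := H1 g g0 gd.
  rewrite a0 add0r in h.
  have f : g * b + g ^+ 2 * c = g * (b + g * c) by ring.
  rewrite f normrM (ger0_norm (ltW g0)) in h.
  have h' : `|b + g * c| <= g * M + C * g ^+ 2.
    rewrite -(ler_pM2l g0); apply: le_trans h _.
    by rewrite le_eqVlt; apply/orP; left; apply/eqP; ring.
  have i1 : g * M <= g * `|M| by apply: ler_wpM2l; [exact: ltW|exact: ler_norm].
  have i2 : C * g ^+ 2 <= g * `|C|.
    apply: le_trans (_ : `|C| * g ^+ 2 <= _).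
      by apply: ler_wpM2r; [exact: sq_ge0'|exact: ler_norm].
    by rewrite mulrC; apply: ler_wpM2r.
  have i4 : `|g * c| = g * `|c| by rewrite normrM ger0_norm // ltW.
  have tri : `|b| <= `|b + g * c| + `|g * c|.
    have eb : b = (b + g * c) - g * c by ring.
    rewrite {1}eb; exact: ler_normB.
  have e : g * (`|M| + `|C| + `|c|) = g * `|M| + g * `|C| + g * `|c| by ring.
  lra.
split => //.
rewrite -subr_le0.
apply: (L0 (K := C) d10) => g g0 gd.
have [h e2 e3] := H1 g g0 gd.
rewrite a0 b0 mulr0 !add0r normrM (ger0_norm (sq_ge0' g)) in h.
have g20 : 0 < g ^+ 2 by exact: exprn_gt0.
rewrite -(ler_pM2l g20).
have e1 : g ^+ 2 * (`|c| - M) = g ^+ 2 * `|c| - g ^+ 2 * M by ring.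
have e4 : g ^+ 2 * (g * C) = C * g ^+ 3 by ring.
rewrite e1 e4; lra.
Qed.

End Fin.
Section Lim.
Variable R : realType.

Lemma lim_texp (a K : R) : 0 < a ->
  (K * t * expR (- (a * t))) @[t --> +oo] --> (0 : R).
Proof.
move=> a0; apply/cvgrPdist_le => e e0.
near=> t.
have t1 : 1 <= t by near: t; apply: nbhs_pinfty_ge; exact: num_real.
have tB : 2 * `|K| / (e * a ^+ 2) <= t.
  by near: t; apply: nbhs_pinfty_ge; exact: num_real.
have t0 : 0 <= t by lra.
have ea2 : 0 < e * a ^+ 2 by apply: mulr_gt0 => //; exact: exprn_gt0.
have f1 : 2 * `|K| <= t * (e * a ^+ 2) by rewrite -ler_pdivrMr.
set E := expR (a * t).
have E0 : 0 < E by exact: expR_gt0.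
have hE : 1 + (a * t) ^+ 2 / 2 <= E.
  have := @expR_ge1Dxn R (a * t) 1 (mulr_ge0 (ltW a0) t0).
  by rewrite /= (_ : (2`!)%:R = 2 :> R) //.
rewrite sub0r normrN normrM (ger0_norm (expR_ge0 _)) normrM (ger0_norm t0).
rewrite expRN -/E ler_pdivrMr //.
have p1 : 2 * `|K| * t <= t * (e * a ^+ 2) * t by apply: ler_wpM2r.
have p2 : e * (1 + (a * t) ^+ 2 / 2) <= e * E by apply: ler_wpM2l => //; exact: ltW.
have q1 : t * (e * a ^+ 2) * t = 2 * (e * ((a * t) ^+ 2 / 2)) by field.
have q2 : e * (1 + (a * t) ^+ 2 / 2) = e + e * ((a * t) ^+ 2 / 2) by ring.
have q3 : E * e = e * E by rewrite mulrC.
have q4 : `|K| * t * e = e * (`|K| * t) by rewrite mulrC.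
lra.
Unshelve. all: by end_near. Qed.

Lemma lim_exp (a : R) : 0 < a -> (expR (- (a * t))) @[t --> +oo] --> (0 : R).
Proof.
move=> a0.
apply: (@squeeze_cvgr _ _ _ _ (fun _ => 0) (fun t => 1 * t * expR (- (a * t)))).
- near=> t.
  have t1 : 1 <= t by near: t; apply: nbhs_pinfty_ge; exact: num_real.
  rewrite expR_ge0 /= mul1r ler_peMl // expR_ge0 //.
- exact: cvg_cst.
- exact: lim_texp.
Unshelve. all: by end_near. Qed.

End Lim.
Theorem mainTheorem4 (R : realType) (d : measure_display) (T : measurableType d)
  (P : probability T R) (rho y : R) (chi1 chi2 xi : T -> R)
  (D1 D2 : R -> R -> R) (h1 h2 z : R -> R -> T -> R)
  (E0 E1 E2 : R -> R) :
  0 <= rho <= 1 ->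
  init_gaussian P rho chi1 chi2 xi ->
  (forall g0 : R, 0 < g0 ->
     dmft_solution P rho y g0 chi1 chi2 xi (D1 g0) (D2 g0) (h1 g0) (h2 g0) (z g0)) ->
  (forall t : R, 0 <= t ->
     bigO3_0 (fun g0 => D2 g0 t - (E0 t + g0 * E1 t + g0 ^+ 2 * E2 t))) ->
  [/\ (forall t : R, 0 <= t -> E1 t = 0),
      (E0 t @[t --> +oo] --> y * (1 - rho)),
      (E2 t @[t --> +oo] --> 0) &
      exists L : R -> R,
        (forall g0 : R, 0 < g0 -> (D2 g0 t ^+ 2 / 2) @[t --> +oo] --> L g0) /\
        bigO3_0 (fun g0 => L g0 - y ^+ 2 / 2 * (1 - rho) ^+ 2)].
Proof.
move=> rho01 HG Hd HO.
have Hd1 := Hd 1 ltr01.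
have HI := Hint1 Hd1.
have m0 : 0 < gmu P chi1 chi2 xi := gmu_gt0 HG HI.
set mu := gmu P chi1 chi2 xi in m0.
have r0 : 0 <= rho by case/andP: rho01.
pose A0 t := y - rho * y + rho * (y * expR (- (2 * mu * t))).
pose M t := rho * (4 * `|y| ^+ 3 / mu) * t * expR (- (2 * mu * t)).
have key : forall g t, 0 < g -> 0 <= t -> `|D2 g t - A0 t| <= g ^+ 2 * M t.
  move=> g t g0 t0.
  rewrite (D2E rho01 HG (Hd g g0) t0) /A0.
  have -> : y - rho * y + rho * D1 g t - (y - rho * y + rho * (y * expR (- (2 * mu * t))))
    = rho * (D1 g t - y * expR (- (2 * mu * t))) by ring.
  rewrite normrM (ger0_norm r0).
  have h := D1near rho01 HG g0 (Hd g g0) t0.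
  have -> : g ^+ 2 * M t = rho * (4 * g ^+ 2 * `|y| ^+ 3 / mu * t * expR (- (2 * mu * t))).
    by rewrite /M; ring.
  by apply: ler_wpM2l.
have coef : forall t, 0 <= t ->
    [/\ A0 t - E0 t = 0, - E1 t = 0 & `|- E2 t| <= M t].
  move=> t t0; have [C [del [d0 HC]]] := HO t t0.
  apply: (coefs (C := C) d0) => g g0 gd.
  have h1' := key g t g0 t0.
  have := HC g; rewrite g0 gd => /(_ isT) h2'.
  have -> : A0 t - E0 t + g * - E1 t + g ^+ 2 * - E2 t =
    (A0 t - D2 g t) + (D2 g t - (E0 t + g * E1 t + g ^+ 2 * E2 t)) by ring.
  apply: le_trans (ler_normD _ _) _.
  by rewrite distrC; apply: lerD.
split.
- move=> t t0; have [_ e _] := coef t t0.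
  by move/eqP: e; rewrite oppr_eq0 => /eqP.
- have hA : A0 t @[t --> +oo] --> y * (1 - rho).
    have -> : y * (1 - rho) = (y - rho * y) + rho * (y * 0) by ring.
    apply: cvgD; first exact: cvg_cst.
    apply: cvgM; first exact: cvg_cst.
    apply: cvgM; first exact: cvg_cst.
    apply: lim_exp; exact: mulr_gt0.
  apply: cvg_trans hA; apply: near_eq_cvg; near=> t.
  have t0 : 0 <= t by near: t; apply: nbhs_pinfty_ge; exact: num_real.
  have [e _ _] := coef t t0.
  by apply/eqP; rewrite -subr_eq0 e.
- have hM : M t @[t --> +oo] --> (0 : R).
    apply: lim_texp; exact: mulr_gt0.
  apply: (@squeeze_cvgr _ _ _ _ (fun t => - M t) M).
  + near=> t.
    have t0 : 0 <= t by near: t; apply: nbhs_pinfty_ge; exact: num_real.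
    have [_ _ e] := coef t t0.
    by rewrite normrN ler_norml in e.
  + by rewrite -oppr0; apply: cvgN.
  + exact: hM.
exists (fun _ => y ^+ 2 / 2 * (1 - rho) ^+ 2); split; last first.
  exists 0, 1; split => // g _; by rewrite subrr normr0 mul0r.
move=> g g0.
have m2 : 0 < 2 * mu by exact: mulr_gt0.
have hE : (`|y| * expR (- (2 * mu * t))) @[t --> +oo] --> (0 : R).
  rewrite -(mulr0 `|y|); apply: cvgM; first exact: cvg_cst.
  exact: lim_exp.
have hD1 : D1 g t @[t --> +oo] --> (0 : R).
  apply: (@squeeze_cvgr _ _ _ _ (fun t => - (`|y| * expR (- (2 * mu * t))))
     (fun t => `|y| * expR (- (2 * mu * t)))).
  + near=> t.
    have t0 : 0 <= t by near: t; apply: nbhs_pinfty_ge; exact: num_real.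
    have e := D1abs rho01 HG (Hd g g0) t0.
    by rewrite -ler_norml.
  + by rewrite -oppr0; apply: cvgN.
  + exact: hE.
have hD2 : D2 g t @[t --> +oo] --> y * (1 - rho).
  have hB : (y - rho * y + rho * D1 g t) @[t --> +oo] --> y * (1 - rho).
    have -> : y * (1 - rho) = (y - rho * y) + rho * 0 by ring.
    apply: cvgD; first exact: cvg_cst.
    by apply: cvgM; [exact: cvg_cst|exact: hD1].
  apply: cvg_trans hB; apply: near_eq_cvg; near=> t.
  have t0 : 0 <= t by near: t; apply: nbhs_pinfty_ge; exact: num_real.
  by rewrite (D2E rho01 HG (Hd g g0) t0).
have -> : y ^+ 2 / 2 * (1 - rho) ^+ 2 = y * (1 - rho) * (y * (1 - rho)) * 2^-1 by ring.
under eq_fun do rewrite expr2.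
apply: cvgM; last exact: cvg_cst.
by apply: cvgM.
Unshelve. all: by end_near. Qed.
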